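(* For any fixed $\lambda > 0$ there exists $p_0(\lambda)$ such that for all primes $p \ge p_0(\lambda)$, \[ \alpha_p(\lambda) := \operatorname{Cov}_{\mu^{(p)}_\lambda}\bigl(g_p(x),\, x^2\bigr) > 0, \] where $\mu^{(p)}_\lambda$ is the probability measure on $[-1,1]$ with $\mu^{(p)}_\lambda(dx) \propto \sqrt{1-x^2}\,(1 - 2x/\sqrt{p} + 1/p)^{-\lambda}\,dx$ and $g_p(x) = -\log(1 - 2x/\sqrt{p} + 1/p)$. *)

(* Defs.v *)
From Stdlib Require Import Reals ZArith Znumtheory.
From Coquelicot Require Import Coquelicot.
Open Scope R_scope.

Definition qp (p : nat) (x : R) : R := 1 - 2 * x / sqrt (INR p) + / INR p.

Definition gp (p : nat) (x : R) : R := - ln (qp p x).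

Definition dens (lam : R) (p : nat) (x : R) : R :=
  sqrt (1 - x ^ 2) * Rpower (qp p x) (- lam).

Definition Zp (lam : R) (p : nat) : R := RInt (dens lam p) (-1) 1.

Definition Ep (lam : R) (p : nat) (f : R -> R) : R :=
  RInt (fun x => f x * dens lam p x) (-1) 1 / Zp lam p.

Definition Covp (lam : R) (p : nat) (f h : R -> R) : R :=
  Ep lam p (fun x => f x * h x) - Ep lam p f * Ep lam p h.

Definition alpha (p : nat) (lam : R) : R :=
  Covp lam p (gp p) (fun x => x ^ 2).

(* Main.v *)
Require Import Defs.
From Stdlib Require Import Reals ZArith Znumtheory Lra Lia.
From Coquelicot Require Import Coquelicot.
Open Scope R_scope.

Lemma exp_le_mono x y : x <= y -> exp x <= exp y.
Proof. intros [H|H]; [left; apply exp_increasing; exact H| subst; lra]. Qed.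

Definition ee (p : nat) := / sqrt (INR p).

Lemma ee_bounds p : 2 <= INR p -> 0 < ee p < 1.
Proof.
  intros Hp. unfold ee.
  assert (1 < sqrt (INR p)).
  { rewrite <- sqrt_1. apply sqrt_lt_1; lra. }
  split.
  - apply Rinv_0_lt_compat; lra.
  - rewrite <- Rinv_1. apply Rinv_lt_contravar; lra.
Qed.

Lemma qp_form p x : 2 <= INR p -> qp p x = 1 - 2 * x * ee p + ee p * ee p.
Proof.
  intros Hp. unfold qp, ee.
  assert (Hs : 0 < sqrt (INR p)) by (apply sqrt_lt_R0; lra).
  assert (Hss : sqrt (INR p) * sqrt (INR p) = INR p) by (apply sqrt_sqrt; lra).
  set (r := sqrt (INR p)) in *. rewrite <- Hss. field. lra.
Qed.

Lemma qp_pos p x : 2 <= INR p -> -1 <= x <= 1 -> 0 < qp p x.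
Proof.
  intros Hp Hx. rewrite qp_form by exact Hp.
  pose proof (ee_bounds p Hp). nra.
Qed.

Lemma gp_cont p z : 2 <= INR p -> -1 <= z <= 1 -> continuous (gp p) z.
Proof.
  intros Hp Hz. apply (ex_derive_continuous (gp p)).
  pose proof (qp_pos p z Hp Hz) as Hq.
  assert (Hs : 0 < sqrt (INR p)) by (apply sqrt_lt_R0; lra).
  unfold gp, qp in *. auto_derive. repeat split; lra.
Qed.

Lemma S_cont z : continuous (fun x => sqrt (1 - x ^ 2)) z.
Proof.
  apply continuous_sqrt_comp. apply (ex_derive_continuous (fun x => 1 - x^2)). auto_derive. auto.
Qed.

Lemma dens_eq lam p x : dens lam p x = sqrt (1 - x ^ 2) * exp (lam * gp p x).
Proof. unfold dens, Rpower, gp. f_equal. f_equal. ring. Qed.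

Lemma cmul (f g : R -> R) z : continuous f z -> continuous g z -> continuous (fun y => f y * g y) z.
Proof. intros; apply (continuous_mult f g); auto. Qed.
Lemma cplus (f g : R -> R) z : continuous f z -> continuous g z -> continuous (fun y => f y + g y) z.
Proof. intros; apply (continuous_plus f g); auto. Qed.
Lemma cminus (f g : R -> R) z : continuous f z -> continuous g z -> continuous (fun y => f y - g y) z.
Proof. intros; apply (continuous_minus f g); auto. Qed.

Lemma dens_cont lam p z : 2 <= INR p -> -1 <= z <= 1 -> continuous (dens lam p) z.
Proof.
  intros Hp Hz. apply (continuous_ext (fun x => sqrt (1 - x ^ 2) * exp (lam * gp p x))).
  { intros; symmetry; apply dens_eq. }
  apply cmul. apply S_cont. apply continuous_exp_comp.
  apply cmul. apply continuous_const. apply gp_cont; auto.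
Qed.

Definition Phi (lam a b : R) : R :=
  (exp (lam * a) * a + exp (lam * b) * b) / (exp (lam * a) + exp (lam * b)).

Lemma Phi_strict lam a b a' b' : 0 < lam -> b <= a -> a - b <= a' - b' -> a + b < a' + b' ->
  Phi lam a b < Phi lam a' b'.
Proof.
  intros Hl Hab Hd Hs. unfold Phi.
  set (u := exp (lam * a)). set (v := exp (lam * b)).
  set (u' := exp (lam * a')). set (v' := exp (lam * b')).
  assert (Hu : 0 < u) by apply exp_pos. assert (Hv : 0 < v) by apply exp_pos.
  assert (Hu' : 0 < u') by apply exp_pos. assert (Hv' : 0 < v') by apply exp_pos.
  assert (Hvu : v <= u) by (apply exp_le_mono; nra).
  assert (Hk : u * v' <= u' * v).
  { unfold u, v, u', v'. rewrite <- !exp_plus. apply exp_le_mono. nra. }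
  set (r := (u - v) / (u + v)). set (r' := (u' - v') / (u' + v')).
  assert (E1 : (u * a + v * b) / (u + v) = (a + b) / 2 + (a - b) / 2 * r) by (unfold r; field; lra).
  assert (E2 : (u' * a' + v' * b') / (u' + v') = (a' + b') / 2 + (a' - b') / 2 * r') by (unfold r'; field; lra).
  rewrite E1, E2.
  assert (Hr0 : 0 <= r) by (unfold r; apply Rmult_le_pos; [lra| left; apply Rinv_0_lt_compat; lra]).
  assert (Hrr : (r' - r) * ((u + v) * (u' + v')) = 2 * (u' * v - u * v')) by (unfold r, r'; field; lra).
  assert (Hr : r <= r').
  { assert (0 < (u + v) * (u' + v')) by nra. nra. }
  nra.
Qed.

Definition GG lam p x := Phi lam (gp p x) (gp p (- x)).

Lemma gp_mono p x y : 2 <= INR p -> -1 <= x -> x <= y -> y <= 1 -> gp p x <= gp p y.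
Proof.
  intros Hp H1 H2 H3. unfold gp.
  assert (0 < qp p y) by (apply qp_pos; lra).
  assert (qp p y <= qp p x).
  { rewrite !qp_form by exact Hp. pose proof (ee_bounds p Hp). nra. }
  pose proof (ln_le _ _ H H0). lra.
Qed.

Lemma gp_sum_strict p x y : 2 <= INR p -> 0 <= x -> x < y -> y <= 1 ->
  gp p x + gp p (- x) < gp p y + gp p (- y).
Proof.
  intros Hp H1 H2 H3. unfold gp.
  assert (Q1 : 0 < qp p x) by (apply qp_pos; lra).
  assert (Q2 : 0 < qp p (-x)) by (apply qp_pos; lra).
  assert (Q3 : 0 < qp p y) by (apply qp_pos; lra).
  assert (Q4 : 0 < qp p (-y)) by (apply qp_pos; lra).
  assert (qp p y * qp p (-y) < qp p x * qp p (-x)).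
  { rewrite !qp_form by exact Hp. pose proof (ee_bounds p Hp).
    assert (x * x < y * y) by nra.
    assert (0 < ee p * ee p) by nra.
    nra. }
  assert (ln (qp p y * qp p (-y)) < ln (qp p x * qp p (-x))).
  { apply ln_increasing; [nra | exact H]. }
  rewrite !ln_mult in H0 by assumption. lra.
Qed.

Lemma GG_strict lam p x y : 0 < lam -> 2 <= INR p -> 0 <= x -> x < y -> y <= 1 ->
  GG lam p x < GG lam p y.
Proof.
  intros Hl Hp H1 H2 H3. unfold GG. apply Phi_strict; auto.
  - apply gp_mono; lra.
  - pose proof (gp_mono p x y Hp ltac:(lra) ltac:(lra) ltac:(lra)).
    pose proof (gp_mono p (-y) (-x) Hp ltac:(lra) ltac:(lra) ltac:(lra)). lra.
  - apply gp_sum_strict; auto.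
Qed.

Lemma RInt_lin4 (f1 f2 f3 f4 : R -> R) k1 k2 k3 k4 a b :
  ex_RInt f1 a b -> ex_RInt f2 a b -> ex_RInt f3 a b -> ex_RInt f4 a b ->
  RInt (fun x => k1 * f1 x + k2 * f2 x + k3 * f3 x + k4 * f4 x) a b =
  k1 * RInt f1 a b + k2 * RInt f2 a b + k3 * RInt f3 a b + k4 * RInt f4 a b.
Proof.
  intros h1 h2 h3 h4. apply is_RInt_unique.
  exact (is_RInt_plus _ _ _ _ _ _
          (is_RInt_plus _ _ _ _ _ _
            (is_RInt_plus _ _ _ _ _ _
              (is_RInt_scal f1 a b k1 _ (RInt_correct f1 a b h1))
              (is_RInt_scal f2 a b k2 _ (RInt_correct f2 a b h2)))
            (is_RInt_scal f3 a b k3 _ (RInt_correct f3 a b h3)))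
          (is_RInt_scal f4 a b k4 _ (RInt_correct f4 a b h4))).
Qed.

Lemma ex_cont (f : R -> R) a b : a <= b -> (forall z, a <= z <= b -> continuous f z) -> ex_RInt f a b.
Proof.
  intros Hab H. apply (ex_RInt_continuous (V:=R_CompleteNormedModule)). intros z Hz.
  rewrite Rmin_left in Hz by lra. rewrite Rmax_right in Hz by lra. auto.
Qed.

Lemma cont_opp (f : R -> R) z : continuous f (- z) -> continuous (fun x => f (- x)) z.
Proof.
  intros H. apply (continuous_comp Ropp f). 
  apply (ex_derive_continuous (fun x => - x)). auto_derive. auto. exact H.
Qed.

Lemma RInt_fold (f : R -> R) : (forall z, -1 <= z <= 1 -> continuous f z) ->
  RInt f (-1) 1 = RInt (fun x => f x + f (- x)) 0 1.
Proof.
  intros Hc.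
  assert (e1 : ex_RInt f (-1) 0) by (apply ex_cont; [lra| intros; apply Hc; lra]).
  assert (e2 : ex_RInt f 0 1) by (apply ex_cont; [lra| intros; apply Hc; lra]).
  assert (e3 : ex_RInt (fun x => f (- x)) 0 1).
  { apply ex_cont; [lra|]. intros; apply cont_opp, Hc; lra. }
  rewrite <- (RInt_Chasles f (-1) 0 1 e1 e2).
  assert (HP : RInt (fun x => f x + f (-x)) 0 1 = RInt f 0 1 + RInt (fun x => f (-x)) 0 1)
    by exact (RInt_plus f (fun x => f (-x)) 0 1 e2 e3).
  rewrite HP.
  assert (RInt f (-1) 0 = RInt (fun x => f (- x)) 0 1).
  { assert (e1' : ex_RInt f (-1 * 0 + 0) (-1 * 1 + 0)).
    { replace (-1 * 0 + 0) with 0 by ring. replace (-1 * 1 + 0) with (-1) by ring.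
      apply ex_RInt_swap; exact e1. }
    assert (H : RInt (fun y => -1 * f (-1 * y + 0)) 0 1 = RInt f (-1 * 0 + 0) (-1 * 1 + 0))
      by exact (RInt_comp_lin f (-1) 0 0 1 e1').
    replace (-1 * 0 + 0) with 0 in H by ring.
    replace (-1 * 1 + 0) with (-1) in H by ring.
    assert (H1 : RInt f 0 (-1) = - RInt f (-1) 0) by exact (eq_sym (opp_RInt_swap f (-1) 0 e1)).
    assert (H2 : RInt (fun y => -1 * f (-1 * y + 0)) 0 1 = RInt (fun y => - (f (- y))) 0 1).
    { apply RInt_ext. intros x _. change (-1 * f (-1 * x + 0) = - f (- x)). replace (-1 * x + 0) with (- x) by ring. ring. }
    assert (H3 : RInt (fun y => - (f (- y))) 0 1 = - RInt (fun y => f (- y)) 0 1)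
      by exact (RInt_opp (fun y => f (- y)) 0 1 e3).
    rewrite H2, H3, H1 in H. lra. }
  rewrite H. unfold plus; simpl. unfold plus; simpl. ring.
Qed.

Lemma RInt_zero a b : RInt (fun _ => 0) a b = 0.
Proof. rewrite RInt_const. unfold scal; simpl. unfold mult; simpl. ring. Qed.

Lemma pos_piece (F : R -> R) a b : a <= b -> (forall z, a <= z <= b -> continuous F z) ->
  (forall x, a < x < b -> 0 < F x) -> 0 <= RInt F a b /\ (a < b -> 0 < RInt F a b).
Proof.
  intros Hab Hc Hp.
  assert (a < b -> 0 < RInt F a b).
  { intros Hlt. rewrite <- (RInt_zero a b). apply RInt_lt; auto.
    intros; apply continuous_const. }
  split; auto. destruct Hab as [Hlt|Heq]; [left; auto|]. subst. rewrite RInt_point. 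
  unfold zero; simpl. lra.
Qed.

Lemma cpow2 z : continuous (fun x => x ^ 2) z.
Proof. apply (ex_derive_continuous (fun x => x ^ 2)). auto_derive. auto. Qed.

Lemma dens_pos lam p x : -1 < x < 1 -> 0 < dens lam p x.
Proof.
  intros Hx. rewrite dens_eq. apply Rmult_lt_0_compat; [|apply exp_pos].
  apply sqrt_lt_R0. nra.
Qed.

Lemma H_eq lam p c m x :
  let h := fun y => (gp p y - c) * (y ^ 2 - m) * dens lam p y in
  h x + h (- x) = (x ^ 2 - m) * sqrt (1 - x ^ 2) *
     (exp (lam * gp p x) + exp (lam * gp p (- x))) * (GG lam p x - c).
Proof.
  intros h. unfold h, GG, Phi. rewrite !dens_eq.
  replace ((- x) ^ 2) with (x ^ 2) by ring.
  assert (0 < exp (lam * gp p x)) by apply exp_pos.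
  assert (0 < exp (lam * gp p (- x))) by apply exp_pos.
  field. lra.
Qed.

Theorem theoremA4 (lam : R) (hlam : 0 < lam) :
  exists p0 : nat, forall p : nat,
    prime (Z.of_nat p) -> (p0 <= p)%nat -> 0 < alpha p lam.
Proof.
  exists 2%nat. intros p Hpr _.
  pose proof (prime_ge_2 _ Hpr) as H2.
  assert (Hp : 2 <= INR p).
  { replace 2 with (INR 2) by (simpl; ring). apply le_INR. lia. }
  assert (cw : forall z, -1 <= z <= 1 -> continuous (dens lam p) z) by (intros; apply dens_cont; auto).
  assert (cg : forall z, -1 <= z <= 1 -> continuous (gp p) z) by (intros; apply gp_cont; auto).
  assert (e0 : ex_RInt (dens lam p) (-1) 1) by (apply ex_cont; [lra| auto]).
  assert (eB : ex_RInt (fun x => gp p x * dens lam p x) (-1) 1).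
  { apply ex_cont; [lra|]. intros; apply cmul; auto. }
  assert (eC : ex_RInt (fun x => x ^ 2 * dens lam p x) (-1) 1).
  { apply ex_cont; [lra|]. intros; apply cmul; auto. apply cpow2. }
  assert (eA : ex_RInt (fun x => gp p x * x ^ 2 * dens lam p x) (-1) 1).
  { apply ex_cont; [lra|]. intros; apply cmul; auto. apply cmul; auto. apply cpow2. }
  unfold alpha, Covp, Ep, Zp. cbv beta.
  set (Z := RInt (dens lam p) (-1) 1).
  set (A := RInt (fun x => gp p x * x ^ 2 * dens lam p x) (-1) 1).
  set (B := RInt (fun x => gp p x * dens lam p x) (-1) 1).
  set (C := RInt (fun x => x ^ 2 * dens lam p x) (-1) 1).
  assert (HZ : 0 < Z).
  { unfold Z. rewrite <- (RInt_zero (-1) 1). apply RInt_lt; auto; [lra| |].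
    intros; apply continuous_const. intros; apply dens_pos; auto. }
  assert (HC0 : 0 <= C).
  { unfold C. rewrite <- (RInt_zero (-1) 1). apply RInt_le; auto; [lra| |].
    apply ex_RInt_const. intros x Hx. pose proof (dens_pos lam p x Hx). nra. }
  assert (HC1 : C <= Z).
  { unfold C, Z. apply RInt_le; auto; [lra|].
    intros x Hx. cbv beta. pose proof (dens_pos lam p x Hx). assert (x ^ 2 <= 1) by nra. nra. }
  set (m := C / Z).
  assert (Hm0 : 0 <= m) by (unfold m; apply Rmult_le_pos; [lra| left; apply Rinv_0_lt_compat; lra]).
  assert (Hm1 : m <= 1).
  { unfold m. apply (Rmult_le_reg_r Z); auto. unfold Rdiv. rewrite Rmult_assoc, Rinv_l; lra. }
  set (t := sqrt m).
  assert (Ht2 : t * t = m) by (apply sqrt_sqrt; lra).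
  assert (Ht0 : 0 <= t) by apply sqrt_pos.
  assert (Ht1 : t <= 1) by (unfold t; rewrite <- sqrt_1; apply sqrt_le_1_alt; lra).
  set (c := GG lam p t).
  set (h := fun y => (gp p y - c) * (y ^ 2 - m) * dens lam p y).
  assert (ch : forall z, -1 <= z <= 1 -> continuous h z).
  { intros z Hz. unfold h. apply cmul; auto. apply cmul.
    apply cminus; auto; apply continuous_const. apply cminus; [apply cpow2| apply continuous_const]. }
  assert (HI : RInt h (-1) 1 = 1 * A + (- m) * B + (- c) * C + (c * m) * Z).
  { unfold A, B, C, Z. rewrite <- RInt_lin4 by auto. apply RInt_ext. intros x _.
    change (h x = 1 * (gp p x * x ^ 2 * dens lam p x) + (- m) * (gp p x * dens lam p x)
      + (- c) * (x ^ 2 * dens lam p x) + (c * m) * dens lam p x).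
    unfold h. ring. }
  assert (Halpha : A / Z - B / Z * (C / Z) = RInt h (-1) 1 / Z).
  { rewrite HI. unfold m. field. lra. }
  change (0 < A / Z - B / Z * (C / Z)). rewrite Halpha. apply Rdiv_lt_0_compat; [|exact HZ].
  rewrite RInt_fold by exact ch.
  set (H := fun x => h x + h (- x)).
  assert (cH : forall z, 0 <= z <= 1 -> continuous H z).
  { intros z Hz. unfold H. apply cplus. apply ch; lra. apply cont_opp, ch; lra. }
  assert (eH1 : ex_RInt H 0 t) by (apply ex_cont; auto; intros; apply cH; lra).
  assert (eH2 : ex_RInt H t 1) by (apply ex_cont; auto; intros; apply cH; lra).
  assert (HS : RInt H 0 1 = RInt H 0 t + RInt H t 1) by exact (eq_sym (RInt_Chasles H 0 t 1 eH1 eH2)).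
  rewrite HS.
  assert (HHeq : forall x, H x = (x ^ 2 - m) * sqrt (1 - x ^ 2) *
     (exp (lam * gp p x) + exp (lam * gp p (- x))) * (GG lam p x - c)).
  { intros x. unfold H, h. apply (H_eq lam p c m x). }
  assert (P1 : forall x, 0 < x < t -> 0 < H x).
  { intros x Hx. rewrite HHeq.
    assert (GG lam p x < c) by (unfold c; apply GG_strict; auto; lra).
    assert (x ^ 2 < m) by (rewrite <- Ht2; nra).
    assert (0 < sqrt (1 - x ^ 2)) by (apply sqrt_lt_R0; nra).
    pose proof (exp_pos (lam * gp p x)). pose proof (exp_pos (lam * gp p (- x))).
    replace ((x ^ 2 - m) * sqrt (1 - x ^ 2) * (exp (lam * gp p x) + exp (lam * gp p (- x))) * (GG lam p x - c))
      with ((m - x ^ 2) * sqrt (1 - x ^ 2) * (exp (lam * gp p x) + exp (lam * gp p (- x))) * (c - GG lam p x)) by ring.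
    repeat apply Rmult_lt_0_compat; lra. }
  assert (P2 : forall x, t < x < 1 -> 0 < H x).
  { intros x Hx. rewrite HHeq.
    assert (c < GG lam p x) by (unfold c; apply GG_strict; auto; lra).
    assert (m < x ^ 2) by (rewrite <- Ht2; nra).
    assert (0 < sqrt (1 - x ^ 2)) by (apply sqrt_lt_R0; nra).
    pose proof (exp_pos (lam * gp p x)). pose proof (exp_pos (lam * gp p (- x))).
    repeat apply Rmult_lt_0_compat; lra. }
  destruct (pos_piece H 0 t Ht0 ltac:(intros; apply cH; lra) P1) as [Q1 Q1'].
  destruct (pos_piece H t 1 Ht1 ltac:(intros; apply cH; lra) P2) as [Q2 Q2'].
  destruct (Rlt_or_le 0 t) as [Hlt|Hle].
  - specialize (Q1' Hlt). lra.
  - assert (t < 1) by lra. specialize (Q2' H0). lra.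
Qed.
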